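(* Let $k=\mathbb{F}_q$ with $q$ a power of $2$. Let $S$ be the set of monic irreducible polynomials of degree $7$ in $k[x]$ of the form $x^7+ax^3+bx+c$ with $a,b,c\in k$, let $S_0\subseteq S$ be those dividing $x^{q^3}+x^q+x$, and $S_1\subseteq S$ those dividing $x^{q^3}+x^{q^2}+x$. Then $$(x^{q^3}+x^q+x)(x^{q^3}+x^{q^2}+x)=x^2\prod_{f\in S}f(x),$$ and $|S_0|=|S_1|=(q^3-1)/7$. *)

(* Defs.v *)
From HB Require Import structures.
From mathcomp Require Import all_boot all_order all_algebra all_field.
From mathcomp Require Import boolp.
Set Implicit Arguments. Unset Strict Implicit. Unset Printing Implicit Defensive.
Import GRing.Theory.
Local Open Scope ring_scope.

Definition trinom7 (F : nzRingType) (a b c : F) : {poly F} :=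
  'X^7 + a%:P * 'X^3 + b%:P * 'X + c%:P.

Definition L0 (F : nzRingType) (q : nat) : {poly F} := 'X^(q ^ 3) + 'X^q + 'X.
Definition L1 (F : nzRingType) (q : nat) : {poly F} := 'X^(q ^ 3) + 'X^(q ^ 2) + 'X.

(* Main.v *)
Require Import Defs.
From HB Require Import structures.
From mathcomp Require Import all_boot all_order all_algebra all_field.
From mathcomp Require Import boolp ring zify.
Set Implicit Arguments. Unset Strict Implicit. Unset Printing Implicit Defensive.
Import GRing.Theory.
Local Open Scope ring_scope.

Section Gen.
Variable F : fieldType.
Implicit Types p g f u : {poly F}.

Lemma irred_coprime f g : irreducible_poly f -> ~~ (f %| g) -> coprimep f g.
Proof. by move=> irf; rewrite irreducible_poly_coprime. Qed.

Lemma irred_dvd_mul f g h : irreducible_poly f -> f %| g * h -> (f %| g) || (f %| h).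
Proof.
move=> irf dv; case: (boolP (f %| g)) => //= /(irred_coprime irf) co.
by rewrite -(Gauss_dvdpr _ co).
Qed.

Lemma ex_irred p : (1 < size p)%N -> exists2 u, irreducible_poly u & u %| p.
Proof.
have [n le] : exists n, (size p <= n)%N by exists (size p).
elim: n p le => [|n IH] p le sp; first by rewrite leqn0 in le; rewrite (eqP le) in sp.
have [irp|nirp] := pselect (irreducible_poly p); first by exists p.
have : ~ (forall q : {poly F}, size q != 1%N -> q %| p -> q %= p).
  by move=> H; apply: nirp; split.
move/existsNP => [q /not_implyP [sq /not_implyP [dq nq]]].
have p0 : p != 0 by rewrite -size_poly_gt0 (ltn_trans _ sp).
have q0 : q != 0 by apply: contraNneq p0 => q0; move: dq; rewrite q0 dvd0p.
have sq1 : (1 < size q)%N.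
  by move: sq q0; rewrite -size_poly_eq0; case: (size q) => [|[]].
have sqp : (size q < size p)%N.
  rewrite ltn_neqAle dvdp_leq // andbT; apply/negP => /eqP e.
  by apply: nq; rewrite -dvdp_size_eqp // e.
have [u iu du] := IH q (leq_trans sqp le) sq1.
by exists u => //; apply: dvdp_trans dq.
Qed.

Lemma irred_eqp u v : u %= v -> irreducible_poly u -> irreducible_poly v.
Proof.
move=> euv [su H]; split; first by rewrite -(eqp_size euv).
move=> q sq dq; apply: (eqp_trans (H q sq _) euv).
by rewrite (eqp_dvdr _ euv).
Qed.

Lemma ex_monic_irred p : (1 < size p)%N ->
  exists u, [/\ u \is monic, irreducible_poly u & u %| p].
Proof.
move=> /ex_irred [u iu du]; have u0 := irredp_neq0 iu.
have l0 : lead_coef u != 0 by rewrite lead_coef_eq0.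
have e : (lead_coef u)^-1 *: u %= u by rewrite eqp_scale // invr_eq0.
exists ((lead_coef u)^-1 *: u); split.
- by apply/monicP; rewrite lead_coefZ mulVf.
- by apply: irred_eqp iu; rewrite eqp_sym.
- by rewrite (eqp_dvdl _ e).
Qed.


Lemma irred_dvd_prod (I : eqType) (s : seq I) (G : I -> {poly F}) f :
  irreducible_poly f -> f %| \prod_(j <- s) G j -> exists2 j, j \in s & f %| G j.
Proof.
move=> irf; elim: s => [|j s IH]; rewrite ?big_nil ?big_cons.
  by rewrite dvdp1 (gtn_eqF irf.1).
move=> /(irred_dvd_mul irf) /orP [d|/IH [k ks d]]; first by exists j; rewrite ?mem_head.
by exists k; rewrite // inE ks orbT.
Qed.

Lemma prod_factors (I : finType) (P : pred I) (G : I -> {poly F}) g :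
  g \is monic -> separable_poly g -> injective G ->
  (forall i, P i -> [/\ G i \is monic, irreducible_poly (G i) & G i %| g]) ->
  (forall u, u \is monic -> irreducible_poly u -> u %| g -> exists2 i, P i & u = G i) ->
  g = \prod_(i | P i) G i.
Proof.
move=> mg sg iG HP Hu.
have dvP : forall s : seq I, uniq s -> all P s -> \prod_(i <- s) G i %| g.
  elim=> [|i s IH] /=; first by rewrite big_nil dvd1p.
  case/andP=> nis us /andP[Pi aPs]; rewrite big_cons.
  have [mi ii di] := HP i Pi.
  rewrite Gauss_dvdp ?di ?IH //; apply: irred_coprime => //.
  apply/negP => /(irred_dvd_prod ii) [j js dij].
  have Pj : P j by move/allP: aPs; apply.
  have [mj ij _] := HP j Pj.
  have := ij _ (negbT (gtn_eqF ii.1)) dij; rewrite eqp_monic // => /eqP /iG eij.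
  by move: nis; rewrite eij js.
have dP : \prod_(i | P i) G i %| g.
  rewrite -big_filter; apply: dvP; first by rewrite filter_uniq // index_enum_uniq.
  exact: filter_all.
have mP : \prod_(i | P i) G i \is monic.
  by apply: monic_prod => i Pi; have [] := HP i Pi.
set Pr := \prod_(i | P i) G i in dP mP *.
have eg := divpK dP; set Q := g %/ Pr in eg.
have mQ : Q \is monic.
  apply/monicP; move/monicP: mg; rewrite -eg lead_coefM (monicP mP) mulr1.
  by [].
have [sQ|sQ] := leqP (size Q) 1.
  have eQ : Q = 1.
    apply/eqP; rewrite -(eqp_monic mQ (monic1 _)) -size_poly_eq1 eqn_leq sQ.
    by rewrite size_poly_gt0 monic_neq0.
  by rewrite -eg eQ mul1r.
have [u [mu iu du]] := ex_monic_irred sQ.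
have dug : u %| g by rewrite -eg dvdp_mulr.
have [i Pi ei] := Hu u mu iu dug.
have duP : u %| Pr by rewrite /Pr (bigD1 i) //= ei dvdp_mulr.
have : u ^+ 2 %| g by rewrite -eg expr2 dvdp_mul.
by rewrite separable_nosquare // (gtn_eqF iu.1).
Qed.

End Gen.

Definition cA {R : comNzRingType} (a b c : R) : R :=
  c^+4 + b^+2*c^+2 + b^+4 + a*b*c^+2 + a*b^+2*c + a^+2*c^+2 + a^+2*b*c + a^+2*b^+2 + a^+4.
Definition cB {R : comNzRingType} (a b c : R) : R :=
  b^+2*c^+4 + b^+4*c^+2 + a*b*c^+4 + a*b^+4*c + a^+2*c^+4 + a^+2*b^+2*c^+2 + a^+2*b^+4
  + a^+4*c^+2 + a^+4*b*c + a^+4*b^+2.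
Definition cC {R : comNzRingType} (a b c : R) : R :=
  a*b^+2*c^+4 + a*b^+4*c^+2 + a^+2*b*c^+4 + a^+2*b^+4*c + a^+4*b*c^+2 + a^+4*b^+2*c.
Lemma prod7 (R : comNzRingType) (x a b c : R) : (2%:R : R) = 0 ->
  \prod_(y <- [:: a; b; c; a + b; b + c; a + b + c; a + c]) (x - y) = x ^+ 7 + cA a b c * x ^+ 3 + cB a b c * x + cC a b c.
Proof. move=> h2. rewrite !big_cons big_nil mulr1. have -> : (x - a) * ((x - b) * ((x - c) * ((x - (a + b)) * ((x - (b + c)) * ((x - (a + b + c)) * (x - (a + c))))))) = x ^+ 7 + cA a b c * x ^+ 3 + cB a b c * x + cC a b c + 2%:R * (0 - a*b^+2*c^+4 - a*b^+3*c^+3 - a*b^+4*c^+2 - a^+2*b*c^+4 - 2%:R*a^+2*b^+2*c^+3 - 2%:R*a^+2*b^+3*c^+2 - a^+2*b^+4*c - a^+3*b*c^+3 - 2%:R*a^+3*b^+2*c^+2 - a^+3*b^+3*c - a^+4*b*c^+2 - a^+4*b^+2*c + x*b^+3*c^+3 + x*a*b*c^+4 + 6%:R*x*a*b^+2*c^+3 + 6%:R*x*a*b^+3*c^+2 + x*a*b^+4*c + 6%:R*x*a^+2*b*c^+3 + 11%:R*x*a^+2*b^+2*c^+2 + 6%:R*x*a^+2*b^+3*c + x*a^+3*c^+3 + 6%:R*x*a^+3*b*c^+2 + 6%:R*x*a^+3*b^+2*c + x*a^+3*b^+3 + x*a^+4*b*c - x^+2*b*c^+4 - 4%:R*x^+2*b^+2*c^+3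 - 4%:R*x^+2*b^+3*c^+2 - x^+2*b^+4*c - x^+2*a*c^+4 - 10%:R*x^+2*a*b*c^+3 - 19%:R*x^+2*a*b^+2*c^+2 - 10%:R*x^+2*a*b^+3*c - x^+2*a*b^+4 - 4%:R*x^+2*a^+2*c^+3 - 19%:R*x^+2*a^+2*b*c^+2 - 19%:R*x^+2*a^+2*b^+2*c - 4%:R*x^+2*a^+2*b^+3 - 4%:R*x^+2*a^+3*c^+2 - 10%:R*x^+2*a^+3*b*c - 4%:R*x^+2*a^+3*b^+2 - x^+2*a^+4*c - x^+2*a^+4*b + 5%:R*x^+3*b*c^+3 + 9%:R*x^+3*b^+2*c^+2 + 5%:R*x^+3*b^+3*c + 5%:R*x^+3*a*c^+3 + 22%:R*x^+3*a*b*c^+2 + 22%:R*x^+3*a*b^+2*c + 5%:R*x^+3*a*b^+3 + 9%:R*x^+3*a^+2*c^+2 + 22%:R*x^+3*a^+2*b*c + 9%:R*x^+3*a^+2*b^+2 + 5%:R*x^+3*a^+3*c + 5%:R*x^+3*a^+3*b - 2%:R*x^+4*c^+3 - 9%:R*x^+4*b*c^+2 - 9%:R*x^+4*b^+2*c - 2%:R*x^+4*b^+3 - 9%:R*x^+4*a*c^+2 - 21%:R*x^+4*a*b*c - 9%:R*x^+4*a*b^+2 - 9%:R*x^+4*a^+2*c - 9%:R*x^+4*a^+2*b - 2%:R*x^+4*a^+3 + 3%:R*x^+5*c^+2 + 7%:R*x^+5*b*c + 3%:R*x^+5*b^+2 + 7%:R*x^+5*a*c + 7%:R*x^+5*a*b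 + 3%:R*x^+5*a^+2 - 2%:R*x^+6*c - 2%:R*x^+6*b - 2%:R*x^+6*a) by rewrite /cA /cB /cC; ring.
by rewrite h2 mul0r addr0. Qed.


Lemma prod7' (R : comNzRingType) (x a b c : R) : (2%:R : R) = 0 ->
  \prod_(y <- [:: a; b; c; a + c; a + b + c; a + b; b + c]) (x - y) =
  x ^+ 7 + cA a b c * x ^+ 3 + cB a b c * x + cC a b c.
Proof. move=> h2. rewrite !big_cons big_nil mulr1. have -> : (x - a) * ((x - b) * ((x - c) * ((x - (a + c)) * ((x - (a + b + c)) * ((x - (a + b)) * (x - (b + c))))))) = x ^+ 7 + cA a b c * x ^+ 3 + cB a b c * x + cC a b c + 2%:R * (0 - a*b^+2*c^+4 - a*b^+3*c^+3 - a*b^+4*c^+2 - a^+2*b*c^+4 - 2%:R*a^+2*b^+2*c^+3 - 2%:R*a^+2*b^+3*c^+2 - a^+2*b^+4*c - a^+3*b*c^+3 - 2%:R*a^+3*b^+2*c^+2 - a^+3*b^+3*c - a^+4*b*c^+2 - a^+4*b^+2*c + x*b^+3*c^+3 + x*a*b*c^+4 + 6%:R*x*a*b^+2*c^+3 + 6%:R*x*a*b^+3*c^+2 + x*a*b^+4*c + 6%:R*x*a^+2*b*c^+3 + 11%:R*x*a^+2*b^+2*c^+2 + 6%:R*x*a^+2*b^+3*c + x*a^+3*c^+3 + 6%:R*x*a^+3*b*c^+2 + 6%:R*x*a^+3*b^+2*c + x*a^+3*b^+3 + x*a^+4*b*c - x^+2*b*c^+4 - 4%:R*x^+2*b^+2*c^+3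 - 4%:R*x^+2*b^+3*c^+2 - x^+2*b^+4*c - x^+2*a*c^+4 - 10%:R*x^+2*a*b*c^+3 - 19%:R*x^+2*a*b^+2*c^+2 - 10%:R*x^+2*a*b^+3*c - x^+2*a*b^+4 - 4%:R*x^+2*a^+2*c^+3 - 19%:R*x^+2*a^+2*b*c^+2 - 19%:R*x^+2*a^+2*b^+2*c - 4%:R*x^+2*a^+2*b^+3 - 4%:R*x^+2*a^+3*c^+2 - 10%:R*x^+2*a^+3*b*c - 4%:R*x^+2*a^+3*b^+2 - x^+2*a^+4*c - x^+2*a^+4*b + 5%:R*x^+3*b*c^+3 + 9%:R*x^+3*b^+2*c^+2 + 5%:R*x^+3*b^+3*c + 5%:R*x^+3*a*c^+3 + 22%:R*x^+3*a*b*c^+2 + 22%:R*x^+3*a*b^+2*c + 5%:R*x^+3*a*b^+3 + 9%:R*x^+3*a^+2*c^+2 + 22%:R*x^+3*a^+2*b*c + 9%:R*x^+3*a^+2*b^+2 + 5%:R*x^+3*a^+3*c + 5%:R*x^+3*a^+3*b - 2%:R*x^+4*c^+3 - 9%:R*x^+4*b*c^+2 - 9%:R*x^+4*b^+2*c - 2%:R*x^+4*b^+3 - 9%:R*x^+4*a*c^+2 - 21%:R*x^+4*a*b*c - 9%:R*x^+4*a*b^+2 - 9%:R*x^+4*a^+2*c - 9%:R*x^+4*a^+2*b - 2%:R*x^+4*a^+3 + 3%:R*x^+5*c^+2 + 7%:R*x^+5*b*c + 3%:R*x^+5*b^+2 + 7%:R*x^+5*a*c + 7%:R*x^+5*a*b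 + 3%:R*x^+5*a^+2 - 2%:R*x^+6*c - 2%:R*x^+6*b - 2%:R*x^+6*a) by rewrite /cA /cB /cC; ring.
by rewrite h2 mul0r addr0. Qed.

Section Trinom.
Variable F : fieldType.

Lemma trinom_lower (a b c : F) : (size (a%:P * 'X^3 + b%:P * 'X + c%:P)%R <= 4)%N.
Proof.
rewrite !mul_polyC; apply: (leq_trans (size_polyD _ _)); rewrite geq_max.
apply/andP; split; last by rewrite (leq_trans (size_polyC_leq1 _)).
apply: (leq_trans (size_polyD _ _)); rewrite geq_max.
apply/andP; split; first by rewrite (leq_trans (size_scale_leq _ _)) // size_polyXn.
by rewrite (leq_trans (size_scale_leq _ _)) // size_polyX.
Qed.

Lemma trinomE (a b c : F) : trinom7 a b c = 'X^7 + (a%:P * 'X^3 + b%:P * 'X + c%:P).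
Proof. by rewrite /trinom7 !addrA. Qed.

Lemma size_trinom (a b c : F) : size (trinom7 a b c) = 8%N.
Proof.
by rewrite trinomE size_polyDl size_polyXn // (leq_ltn_trans (trinom_lower a b c)).
Qed.

Lemma trinom_monic (a b c : F) : trinom7 a b c \is monic.
Proof.
apply/monicP; rewrite trinomE lead_coefDl ?lead_coefXn // size_polyXn.
exact: (leq_ltn_trans (trinom_lower a b c)).
Qed.

Lemma trinom_coef (a b c : F) :
  [/\ (trinom7 a b c)`_3 = a, (trinom7 a b c)`_1 = b & (trinom7 a b c)`_0 = c].
Proof.
by split; rewrite /trinom7 !(coefD, coefCM, coefXn, coefX, coefC) /= !(mulr0, mulr1, addr0, add0r).
Qed.

Lemma trinom_inj : injective (fun t : F * F * F => trinom7 t.1.1 t.1.2 t.2).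
Proof.
move=> [[a b] c] [[a' b'] c'] /= e.
have [h3 h1 h0] := trinom_coef a b c; have [h3' h1' h0'] := trinom_coef a' b' c'.
have ea : a = a' by rewrite -h3 e h3'.
have eb : b = b' by rewrite -h1 e h1'.
have ec : c = c' by rewrite -h0 e h0'.
by rewrite ea eb ec.
Qed.

Lemma trinom_root0 (a b c : F) : irreducible_poly (trinom7 a b c) -> c != 0.
Proof.
move=> ip; apply/eqP => c0.
have dX : 'X %| trinom7 a b c.
  rewrite -['X]subr0 -polyC0 -root_factor_theorem /root /trinom7 c0 !hornerE.
  by rewrite expr0n /= mulr0 !addr0.
have := ip 'X; rewrite size_polyX => /(_ isT dX) /eqp_size.
by rewrite size_polyX size_trinom.
Qed.

Lemma trinom0 (a b c : F) : (trinom7 a b c).[0] = c.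
Proof. by rewrite /trinom7 !hornerE expr0n /= !mulr0 !add0r. Qed.

End Trinom.

Section Frob.
Variables (F : finFieldType) (K : closedFieldType) (iota : {rmorphism F -> K}).
Hypothesis H2 : (2%N \in [pchar F]).

Lemma H2K : (2%N \in [pchar K]). Proof. exact: rmorph_pchar H2. Qed.

Lemma natq : [pchar K].-nat #|F|.
Proof.
rewrite (eq_pnat _ (pcharf_eq H2K)) (card_pprimeChar H2) pnatX pnat_id //.
Qed.

Definition phi (y : K) : K := y ^+ #|F|.

Lemma phi_nmod : nmod_morphism phi.
Proof.
split=> [|x y]; rewrite /phi; first by rewrite expr0n eqn0Ngt (ltn_trans _ (finNzRing_gt1 F)).
exact: exprDn_pchar natq.
Qed.

Lemma phi_monoid : monoid_morphism phi.
Proof. by split=> [|x y]; rewrite /phi ?expr1n ?exprMn. Qed.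

HB.instance Definition _ := GRing.isNmodMorphism.Build K K phi phi_nmod.
HB.instance Definition _ := GRing.isMonoidMorphism.Build K K phi phi_monoid.

Lemma phi_inj : injective phi.
Proof. exact: fmorph_inj. Qed.

Lemma phi_iota a : phi (iota a) = iota a.
Proof. by rewrite /phi -rmorphXn expf_card. Qed.


Lemma phi_fixed y : phi y = y -> exists a, y = iota a.
Proof.
move=> fy.
have : (map_poly iota ('X^#|F| - 'X : {poly F})).[y] = 0.
  by rewrite rmorphB /= map_polyXn map_polyX !hornerE -/(phi y) fy subrr.
rewrite finField_genPoly rmorph_prod horner_prod => /eqP; rewrite prodf_seq_eq0.
case/hasP => a _ /=; rewrite map_polyXsubC hornerXsubC subr_eq0 => /eqP ->.
by exists a.
Qed.

Lemma map_fixed (h : {poly K}) : map_poly phi h = h -> exists h0, h = (map_poly iota h0).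
Proof.
move=> hf; exists (\poly_(i < size h) (odflt 0 [pick a | iota a == h`_i])).
apply/polyP => i; rewrite coef_map coef_poly; case: ltnP => [lt|ge]; last first.
  by rewrite nth_default // raddf0.
case: (pickP (fun a => iota a == h`_i)) => [a /eqP <- //|none].
have : phi h`_i = h`_i by rewrite -coef_map hf.
by move/phi_fixed => [a ea]; move: (none a); rewrite ea eqxx.
Qed.

Lemma phi_map (p : {poly F}) : map_poly phi ((map_poly iota p)) = (map_poly iota p).
Proof.
by apply/polyP => i; rewrite !coef_map /= phi_iota.
Qed.

Lemma phi_root (p : {poly F}) y : root ((map_poly iota p)) y -> root ((map_poly iota p)) (phi y).
Proof.
by rewrite /root -{2}(phi_map p) horner_map /= => /eqP ->; rewrite rmorph0.
Qed.

Lemma iter_phi_root (p : {poly F}) y n : root ((map_poly iota p)) y -> root ((map_poly iota p)) (iter n phi y).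
Proof. by move=> r; elim: n => //= n IH; apply: phi_root. Qed.

Lemma iter_phiD n x y : iter n phi (x + y) = iter n phi x + iter n phi y.
Proof. by elim: n => //= n ->; rewrite rmorphD. Qed.

Lemma iter_phi_inj n : injective (iter n phi).
Proof. by elim: n => //= n IH x y /phi_inj /IH. Qed.

Lemma iter_phiE n y : iter n phi y = y ^+ (#|F| ^ n).
Proof. by elim: n => [|n IH] /=; rewrite ?expr1 // IH /phi -exprM expnSr. Qed.

Lemma orbit_factor (p : {poly F}) (s : seq K) :
  p \is monic -> irreducible_poly p -> uniq s -> all (root ((map_poly iota p))) s ->
  perm_eq (map phi s) s -> s != [::] ->
  (map_poly iota p) = \prod_(x <- s) ('X - x%:P).
Proof.
move=> mp ip us rs ps sn.
set h := \prod_(x <- s) ('X - x%:P).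
have hphi : map_poly phi h = h.
  rewrite /h rmorph_prod /=; under eq_bigr do rewrite map_polyXsubC.
  transitivity (\prod_(x <- map phi s) ('X - x%:P)); last exact: perm_big.
  by rewrite big_map.
have [h0 eh] := map_fixed hphi.
have dh : h %| (map_poly iota p).
  have ur : uniq_roots s by rewrite uniq_rootsE.
  have [q' ->] := uniq_roots_prod_XsubC rs ur.
  exact: dvdp_mull.
rewrite eh dvdp_map in dh.
have sh0 : size h0 = (size s).+1 by rewrite -(size_map_poly iota) -eh size_prod_XsubC.
have mh0 : h0 \is monic by rewrite -(map_monic iota) -eh monic_prod_XsubC.
have ns : size h0 != 1%N by rewrite sh0; case: (s) sn.
have := ip h0 ns dh; rewrite eqp_monic // => /eqP e.
by rewrite eh e.
Qed.


Lemma period_bound (p : {poly F}) r d :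
  p \is monic -> irreducible_poly p -> root (map_poly iota p) r -> (0 < d)%N ->
  iter d phi r = r -> (size p <= d.+1)%N.
Proof.
move=> mp ip rr d0 dr.
have ex : exists n, (0 < n)%N && (iter n phi r == r) by exists d; rewrite d0 dr eqxx.
case: (ex_minnP ex) => e /andP[e0 /eqP er] emin.
set s := mkseq (fun i => iter i phi r) e.
have inj : {in seq.iota 0 e &, injective (fun i => iter i phi r)}.
  move=> i j; rewrite !mem_iota !add0n => /andP[_ ie] /andP[_ je] eij.
  wlog lij : i j ie je eij / (i <= j)%N.
    move=> W; case: (leqP i j) => [l|l]; first exact: W.
    by symmetry; apply: W => //; exact: ltnW.
  move: lij; rewrite leq_eqVlt => /orP[/eqP //|lij]; exfalso.
  have h : iter (j - i)%N phi r = r.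
    apply: (@iter_phi_inj i); rewrite -iterD subnKC ?(ltnW lij) //.
  have := emin (j - i)%N; rewrite subn_gt0 lij h eqxx => /(_ isT).
  rewrite leqNgt => /negP; apply; exact: leq_ltn_trans (leq_subr i j) je.
have us : uniq s by rewrite /s /mkseq map_inj_in_uniq ?iota_uniq.
have rs : all (root (map_poly iota p)) s.
  by apply/allP => x /mapP [i _ ->]; apply: iter_phi_root.
have ps : perm_eq (map phi s) s.
  have us' : uniq (map phi s) by rewrite map_inj_uniq //; exact: phi_inj.
  have sub : {subset map phi s <= s}.
    move=> x /mapP [y /mapP [i]]; rewrite mem_iota add0n => /andP[_ ie] -> ->.
    change (iter i.+1 phi r \in s).
    have [lt|ge] := ltnP i.+1 e.
      by apply/mapP; exists i.+1; rewrite ?mem_iota.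
    have -> : i.+1 = e by apply/eqP; rewrite eqn_leq ge ie.
    by rewrite er; apply/mapP; exists 0%N; rewrite ?mem_iota.
  have sz : (size s <= size (map phi s))%N by rewrite size_map.
  have [_ eqm] := uniq_min_size us' sub sz.
  exact: uniq_perm.
have sn : s != [::] by rewrite /s; case: (e) e0.
have E := orbit_factor mp ip us rs ps sn.
have sp : size (map_poly iota p) = (size s).+1 by rewrite E size_prod_XsubC.
rewrite size_map_poly size_mkseq in sp; rewrite sp.
by have := emin d; rewrite d0 dr eqxx => /(_ isT).
Qed.


Lemma two0 : (2%:R : K) = 0. Proof. exact: pcharf0 H2K. Qed.
Lemma add2 (x : K) : x + x = 0. Proof. by rewrite -mulr2n -mulr_natr two0 mulr0. Qed.
Lemma eq_add0 (x y : K) : (x + y == 0) = (x == y).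
Proof. by rewrite addr_eq0 (oppr_pchar2 H2K). Qed.

Definition comb (a b c : K) (u : bool * bool * bool) : K :=
  (if u.1.1 then a else 0) + (if u.1.2 then b else 0) + (if u.2 then c else 0).

Lemma combD a b c u v : comb a b c u + comb a b c v =
  comb a b c (u.1.1 (+) v.1.1, u.1.2 (+) v.1.2, u.2 (+) v.2).
Proof.
case: u v => [[[] []] []] [[[] []] []]; rewrite /comb /= ?addr0 ?add0r //; ring: two0.
Qed.

Lemma comb_inj a b c : a != 0 -> b != 0 -> c != 0 -> b != a -> c != a -> c != b ->
  c != a + b -> injective (comb a b c).
Proof.
move=> a0 b0 c0 ba ca cb cab.
have key : forall u, comb a b c u = 0 -> u = (false, false, false).
  case=> [[[] []] []]; rewrite /comb /= ?addr0 ?add0r // => /eqP; rewrite ?eq_add0.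
  - by rewrite eq_sym (negPf cab).
  - by rewrite eq_sym (negPf ba).
  - by rewrite eq_sym (negPf ca).
  - by rewrite (negPf a0).
  - by rewrite eq_sym (negPf cb).
  - by rewrite (negPf b0).
  - by rewrite (negPf c0).
move=> [[u1 u2] u3] [[v1 v2] v3] e.
have := combD a b c (u1, u2, u3) (v1, v2, v3); rewrite e add2 /= => /esym /key [].
by clear e; case: u1 v1 => [] []; case: u2 v2 => [] []; case: u3 v3 => [] [].
Qed.


Lemma iter_phi0 n : iter n phi 0 = 0.
Proof. by elim: n => //= n ->; rewrite rmorph0. Qed.

Lemma polyprod7 (a b c : K) :
  \prod_(y <- [:: a; b; c; a + b; b + c; a + b + c; a + c]) ('X - y%:P) =
  'X^7 + (cA a b c)%:P * 'X^3 + (cB a b c)%:P * 'X + (cC a b c)%:P.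
Proof.
have h2 : (2%:R : {poly K}) = 0 by rewrite -polyC_natr two0.
have := prod7 'X a%:P b%:P c%:P h2; rewrite !big_cons !big_nil -!polyCD => ->.
have fA : (cA a b c)%:P = cA a%:P b%:P c%:P by rewrite /cA !(rmorphD, rmorphM, rmorphXn).
have fB : (cB a b c)%:P = cB a%:P b%:P c%:P by rewrite /cB !(rmorphD, rmorphM, rmorphXn).
have fC : (cC a b c)%:P = cC a%:P b%:P c%:P by rewrite /cC !(rmorphD, rmorphM, rmorphXn).
by rewrite fA fB fC.
Qed.

Lemma polyprod7' (a b c : K) :
  \prod_(y <- [:: a; b; c; a + c; a + b + c; a + b; b + c]) ('X - y%:P) =
  'X^7 + (cA a b c)%:P * 'X^3 + (cB a b c)%:P * 'X + (cC a b c)%:P.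
Proof.
have h2 : (2%:R : {poly K}) = 0 by rewrite -polyC_natr two0.
have := prod7' 'X a%:P b%:P c%:P h2; rewrite !big_cons !big_nil -!polyCD => ->.
have fA : (cA a b c)%:P = cA a%:P b%:P c%:P by rewrite /cA !(rmorphD, rmorphM, rmorphXn).
have fB : (cB a b c)%:P = cB a%:P b%:P c%:P by rewrite /cB !(rmorphD, rmorphM, rmorphXn).
have fC : (cC a b c)%:P = cC a%:P b%:P c%:P by rewrite /cC !(rmorphD, rmorphM, rmorphXn).
by rewrite fA fB fC.
Qed.

Lemma form_of_prod (p : {poly F}) (A B C : K) :
  map_poly iota p = 'X^7 + A%:P * 'X^3 + B%:P * 'X + C%:P ->
  exists a b c, p = trinom7 a b c.
Proof.
move=> H; exists p`_3, p`_1, p`_0; apply: (map_poly_inj iota).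
have e3 : iota p`_3 = A.
  by rewrite -coef_map H !(coefD, coefCM, coefXn, coefX, coefC) /= !(mulr0, mulr1, addr0, add0r).
have e1 : iota p`_1 = B.
  by rewrite -coef_map H !(coefD, coefCM, coefXn, coefX, coefC) /= !(mulr0, mulr1, addr0, add0r).
have e0 : iota p`_0 = C.
  by rewrite -coef_map H !(coefD, coefCM, coefXn, coefX, coefC) /= !(mulr0, mulr1, addr0, add0r).
rewrite H /trinom7 !rmorphD /= !map_polyXn !rmorphM /= ?map_polyC ?map_polyX ?map_polyXn.
by rewrite -e3 -e1 -e0.
Qed.


Lemma uniq_comb a b c (us : seq (bool * bool * bool)) :
  a != 0 -> b != 0 -> c != 0 -> b != a -> c != a -> c != b -> c != a + b ->
  uniq us -> uniq (map (comb a b c) us).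
Proof. by move=> *; rewrite map_inj_uniq //; apply: comb_inj. Qed.

Lemma iter3_rec r (k : bool) :
  iter 3 phi r = (if k then iter 2 phi r else iter 1 phi r) + r ->
  forall i, iter i.+3 phi r = (if k then iter i.+2 phi r else iter i.+1 phi r) + iter i phi r.
Proof.
move=> e i; rewrite -addn3 iterD e iter_phiD; case: k {e} => /=.
  by rewrite -!iterSr.
by rewrite -iterSr.
Qed.

Lemma root_form (p : {poly F}) r (k : bool) :
  p \is monic -> irreducible_poly p -> root (map_poly iota p) r -> r != 0 ->
  iter 3 phi r = (if k then iter 2 phi r else iter 1 phi r) + r ->
  exists a b c, p = trinom7 a b c.
Proof.
move=> mp ip rr r0 e3.
have rec := iter3_rec e3.
have x1n : iter 1 phi r != 0 by rewrite /= fmorph_eq0.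
have x2n : iter 2 phi r != 0 by rewrite /= !fmorph_eq0.
have rs : forall n, root (map_poly iota p) (iter n phi r) by move=> n; apply: iter_phi_root.
have inj3 : forall y, iter 3 phi y = 0 -> y = 0.
  by move=> y e; apply: (@iter_phi_inj 3); rewrite e iter_phi0.
have sn : forall s : seq K, size s = 7%N -> s != [::] by case.
have ps : forall s : seq K, s = [:: r; iter 1 phi r; iter 2 phi r; iter 3 phi r; iter 4 phi r;
             iter 5 phi r; iter 6 phi r] -> iter 7 phi r = r -> perm_eq (map phi s) s.
  move=> s -> e7; have -> : map phi [:: r; iter 1 phi r; iter 2 phi r; iter 3 phi r;
      iter 4 phi r; iter 5 phi r; iter 6 phi r] = rot 1 [:: r; iter 1 phi r; iter 2 phi r;
      iter 3 phi r; iter 4 phi r; iter 5 phi r; iter 6 phi r].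
    change ([:: iter 1 phi r; iter 2 phi r; iter 3 phi r; iter 4 phi r; iter 5 phi r;
             iter 6 phi r; iter 7 phi r] = rot 1 [:: r; iter 1 phi r; iter 2 phi r;
      iter 3 phi r; iter 4 phi r; iter 5 phi r; iter 6 phi r]); by rewrite e7.
  by rewrite perm_rot.
have ars : forall s : seq K, s = [:: r; iter 1 phi r; iter 2 phi r; iter 3 phi r; iter 4 phi r;
             iter 5 phi r; iter 6 phi r] -> all (root (map_poly iota p)) s.
  move=> s ->.
  change (all (root (map_poly iota p)) (map (fun i => iter i phi r) (seq.iota 0 7))).
  by apply/allP => y /mapP [i _ ->]; exact: rs.
case: k rec e3 => rec e3.
-
  have e4 : iter 4 phi r = r + iter 1 phi r + iter 2 phi r by rewrite (rec 1) e3; ring.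
  have e5 : iter 5 phi r = r + iter 1 phi r by rewrite (rec 2) e4; ring: two0.
  have e6 : iter 6 phi r = iter 1 phi r + iter 2 phi r by rewrite (rec 3) e5 e3; ring: two0.
  have e7 : iter 7 phi r = r by rewrite (rec 4) e6 e4; ring: two0.
  have ba : iter 1 phi r != r.
    apply/eqP => h; have h2 : iter 2 phi r = iter 1 phi r.
      by change (phi (iter 1 phi r) = iter 1 phi r); rewrite h; exact: h.
    by move: e3; rewrite h2 h add2 => /inj3 /eqP; rewrite (negPf r0).
  have ca : iter 2 phi r != r.
    by apply/eqP => h; move: e3; rewrite h add2 => /inj3 /eqP; rewrite (negPf r0).
  have cb : iter 2 phi r != iter 1 phi r.
    by apply: contra ba => /eqP /phi_inj e; apply/eqP; exact: e.
  have cab : iter 2 phi r != r + iter 1 phi r.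
    apply/eqP => h; have : iter 3 phi r = iter 2 phi r + iter 1 phi r.
      have : phi (iter 2 phi r) = phi (r + iter 1 phi r) by rewrite h.
      by rewrite rmorphD addrC => e; exact: e.
    rewrite e3 => /addrI /eqP; by rewrite eq_sym (negPf ba).
  have e3' : iter 3 phi r = r + iter 2 phi r by rewrite e3 addrC.
  set s := [:: r; iter 1 phi r; iter 2 phi r; iter 3 phi r; iter 4 phi r;
             iter 5 phi r; iter 6 phi r].
  have us : uniq s.
    have -> : s = map (comb r (iter 1 phi r) (iter 2 phi r)) [:: (true, false, false);
        (false, true, false); (false, false, true); (true, false, true); (true, true, true);
        (true, true, false); (false, true, true)].
      by rewrite /s e3' e4 e5 e6 /comb /= !addr0 !add0r.
    by apply: uniq_comb.
  have E := orbit_factor mp ip us (ars s erefl) (ps s erefl e7) (sn s erefl).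
  move: E; rewrite /s e3' e4 e5 e6 polyprod7'; exact: form_of_prod.
-
  have e4 : iter 4 phi r = iter 1 phi r + iter 2 phi r by rewrite (rec 1) addrC.
  have e5 : iter 5 phi r = r + iter 1 phi r + iter 2 phi r by rewrite (rec 2) e3; ring.
  have e6 : iter 6 phi r = r + iter 2 phi r by rewrite (rec 3) e4 e3; ring: two0.
  have e7 : iter 7 phi r = r by rewrite (rec 4) e5 e4; ring: two0.
  have ba : iter 1 phi r != r.
    by apply/eqP => h; move: e3; rewrite h add2 => /inj3 /eqP; rewrite (negPf r0).
  have ca : iter 2 phi r != r.
    apply/eqP => h; have : iter 3 phi r = iter 1 phi r.
      by change (phi (iter 2 phi r) = phi r); rewrite h.
    rewrite e3 -{2}[iter 1 phi r]addr0 => /addrI /eqP; by rewrite (negPf r0).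
  have cb : iter 2 phi r != iter 1 phi r.
    by apply: contra ba => /eqP /phi_inj e; apply/eqP; exact: e.
  have cab : iter 2 phi r != r + iter 1 phi r.
    apply/eqP => h; have : iter 3 phi r = iter 1 phi r + iter 2 phi r.
      have : phi (iter 2 phi r) = phi (r + iter 1 phi r) by rewrite h.
      by rewrite rmorphD => e; exact: e.
    rewrite e3 => /addrI /eqP; by rewrite eq_sym (negPf ca).
  have e3' : iter 3 phi r = r + iter 1 phi r by rewrite e3 addrC.
  set s := [:: r; iter 1 phi r; iter 2 phi r; iter 3 phi r; iter 4 phi r;
             iter 5 phi r; iter 6 phi r].
  have us : uniq s.
    have -> : s = map (comb r (iter 1 phi r) (iter 2 phi r)) [:: (true, false, false);
        (false, true, false); (false, false, true); (true, true, false); (false, true, true);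
        (true, true, true); (true, false, true)].
      by rewrite /s e3' e4 e5 e6 /comb /= !addr0 !add0r.
    by apply: uniq_comb.
  have E := orbit_factor mp ip us (ars s erefl) (ps s erefl e7) (sn s erefl).
  move: E; rewrite /s e3' e4 e5 e6 polyprod7; exact: form_of_prod.
Qed.


Lemma expD2 (x y : K) n : (x + y) ^+ (2 ^ n) = x ^+ (2 ^ n) + y ^+ (2 ^ n).
Proof.
apply: exprDn_pchar; rewrite (eq_pnat _ (pcharf_eq H2K)) pnatX pnat_id //.
Qed.

Definition gv (a b c : F) (y : K) : K :=
  y ^+ 8 + iota a * y ^+ 4 + iota b * y ^+ 2 + iota c * y.

Lemma gvD a b c x y : gv a b c (x + y) = gv a b c x + gv a b c y.
Proof.
have e8 : (x + y) ^+ 8 = x ^+ 8 + y ^+ 8 := expD2 x y 3.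
have e4 : (x + y) ^+ 4 = x ^+ 4 + y ^+ 4 := expD2 x y 2.
have e2 : (x + y) ^+ 2 = x ^+ 2 + y ^+ 2 := expD2 x y 1.
rewrite /gv e8 e4 e2; ring.
Qed.

Lemma gv0 a b c : gv a b c 0 = 0.
Proof. by rewrite /gv !expr0n /= !mulr0 !addr0. Qed.

Lemma gv_horner a b c y :
  (map_poly iota (trinom7 a b c) * 'X).[y] = gv a b c y.
Proof.
rewrite /trinom7 !rmorphD /= !map_polyXn !rmorphM /= ?map_polyC ?map_polyX ?map_polyXn.
rewrite !hornerE /gv /=. ring.
Qed.

Lemma gv_comb a b c x0 x1 x2 u : gv a b c x0 = 0 -> gv a b c x1 = 0 -> gv a b c x2 = 0 ->
  gv a b c (comb x0 x1 x2 u) = 0.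
Proof.
move=> h0 h1 h2; rewrite /comb !gvD.
by case: u => [[[] []] []]; rewrite /= ?h0 ?h1 ?h2 ?gv0 !addr0.
Qed.



Lemma core_b (a b c : F) r : irreducible_poly (trinom7 a b c) ->
  root (map_poly iota (trinom7 a b c)) r ->
  exists k : bool, iter 3 phi r = (if k then iter 2 phi r else iter 1 phi r) + r.
Proof.
move=> ip rr; have mf := trinom_monic a b c.
have pb : forall d, (0 < d)%N -> (d < 7)%N -> iter d phi r = r -> False.
  move=> d d0 d7 dr; have := period_bound mf ip rr d0 dr.
  by rewrite size_trinom ltnNge => /negP; apply.
have rs : forall n, root (map_poly iota (trinom7 a b c)) (iter n phi r).
  by move=> n; apply: iter_phi_root.
have gz : forall n, gv a b c (iter n phi r) = 0.
  by move=> n; rewrite -gv_horner hornerM (eqP (rs n)) mul0r.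
have r0 : r != 0.
  by apply/eqP => r0; apply: (pb 1%N) => //=; rewrite r0 rmorph0.
have x1n : iter 1 phi r != 0 by rewrite /= fmorph_eq0.
have x2n : iter 2 phi r != 0 by rewrite /= !fmorph_eq0.
have inj3 : forall y, iter 3 phi y = 0 -> y = 0.
  by move=> y e; apply: (@iter_phi_inj 3); rewrite e iter_phi0.
have [ba|ba] := eqVneq (iter 1 phi r) r; first by exfalso; apply: (pb 1%N).
have [ca|ca] := eqVneq (iter 2 phi r) r; first by exfalso; apply: (pb 2%N).
have [cb|cb] := eqVneq (iter 2 phi r) (iter 1 phi r).
  by exfalso; move/eqP: ba; apply; exact: phi_inj cb.
have [cab|cab] := eqVneq (iter 2 phi r) (r + iter 1 phi r).
  exfalso; apply: (pb 3%N) => //.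
  have : phi (iter 2 phi r) = phi (r + iter 1 phi r) by rewrite cab.
  rewrite rmorphD => e; change (iter 3 phi r = iter 1 phi r + iter 2 phi r) in e.
  by rewrite e cab; ring: two0.
set tr := [:: (false, false, false); (true, false, false); (false, true, false);
   (false, false, true); (true, true, false); (false, true, true); (true, true, true);
   (true, false, true)].
set L8 := map (comb r (iter 1 phi r) (iter 2 phi r)) tr.
have uL : uniq L8 by apply: uniq_comb.
have gL : forall y, y \in L8 -> gv a b c y = 0.
  move=> y /mapP [u _ ->]; apply: gv_comb; [exact: (gz 0%N) | exact: (gz 1%N) | exact: (gz 2%N)].
have g0 : map_poly iota (trinom7 a b c) * 'X != 0.
  by rewrite mulf_neq0 ?polyX_eq0 // map_poly_eq0 monic_neq0.
have sg : size (map_poly iota (trinom7 a b c) * 'X) = 9%N.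
  by rewrite size_mulX ?map_poly_eq0 ?monic_neq0 // size_map_poly size_trinom.
have x3L : iter 3 phi r \in L8.
  apply: contraT => nL.
  have u9 : uniq (iter 3 phi r :: L8) by rewrite cons_uniq nL uL.
  have a9 : all (root (map_poly iota (trinom7 a b c) * 'X)) (iter 3 phi r :: L8).
    apply/allP => y; rewrite inE => /orP [/eqP -> | /gL h]; rewrite /root gv_horner ?h //.
    exact/eqP/gz.
  have := max_poly_roots g0 a9 u9.
  by rewrite sg /L8 /=.
move: x3L => /mapP [[[u1 u2] u3] _]; case: u1; case: u2; case: u3;
  rewrite /comb /= ?addr0 ?add0r => e3.
- change (iter 3 phi r = r + iter 1 phi r + iter 2 phi r) in e3.
  exfalso; apply: (pb 4%N) => //.
  have : phi (iter 3 phi r) = phi (r + iter 1 phi r + iter 2 phi r) by rewrite e3.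
  rewrite !rmorphD => e; change (iter 4 phi r = iter 1 phi r + iter 2 phi r + iter 3 phi r) in e.
  rewrite e e3; ring: two0.
- change (iter 3 phi r = r + iter 1 phi r) in e3.
  by exists false; exact: (etrans e3 (addrC _ _)).
- change (iter 3 phi r = r + iter 2 phi r) in e3.
  by exists true; exact: (etrans e3 (addrC _ _)).
- by exfalso; apply: (pb 3%N).
- change (iter 3 phi r = iter 1 phi r + iter 2 phi r) in e3.
  exfalso; apply: (pb 3%N) => //; apply: (@iter_phi_inj 1).
  have : phi (iter 3 phi r) = phi (iter 1 phi r + iter 2 phi r) by rewrite e3.
  rewrite rmorphD => e; change (iter 4 phi r = iter 2 phi r + iter 3 phi r) in e.
  change (iter 4 phi r = iter 1 phi r); rewrite e e3; ring: two0.
- exfalso; move: ca; have : iter 2 phi r = r by apply: (@iter_phi_inj 1).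
  by move=> ->; rewrite eqxx.
- by exfalso; move/eqP: cb; apply; exact: phi_inj e3.
- by move/inj3/eqP: e3; rewrite (negPf r0).
Qed.

Lemma dvd_of_root (f g : {poly F}) r : irreducible_poly f ->
  root (map_poly iota f) r -> root (map_poly iota g) r -> f %| g.
Proof.
move=> ip rf rg; apply: contraT => nd.
have co := irred_coprime ip nd; rewrite -(coprimep_map iota) in co.
by have := coprimep_root co rf; rewrite (eqP rg) eqxx.
Qed.

Definition Lk (k : bool) : {poly F} := if k then L1 F #|F| else L0 F #|F|.
Definition Mk (k : bool) : {poly F} :=
  'X^((#|F| ^ 3)%N.-1) + 'X^((if k then #|F| ^ 2 else #|F|)%N.-1) + 1.

Lemma L_horner (k : bool) r : (map_poly iota (Lk k)).[r] =
  iter 3 phi r + (if k then iter 2 phi r else iter 1 phi r) + r.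
Proof.
case: k; rewrite /Lk /L0 /L1 !rmorphD /= !map_polyXn map_polyX !hornerE.
  by rewrite -(iter_phiE 3) -(iter_phiE 2).
by rewrite -(iter_phiE 3) -{1}(expn1 #|F|) -(iter_phiE 1).
Qed.

Lemma L_root k r : root (map_poly iota (Lk k)) r =
  (iter 3 phi r == (if k then iter 2 phi r else iter 1 phi r) + r).
Proof. by rewrite /root L_horner -addrA eq_add0. Qed.

Lemma q_gt1 : (1 < #|F|)%N. Proof. exact: finNzRing_gt1. Qed.

Lemma two_dvd_q n : (0 < n)%N -> (2 %| #|F| ^ n)%N.
Proof.
move=> n0; apply: dvdn_exp => //; have := q_gt1; rewrite (card_pprimeChar H2).
by case: (logn 2 _) => // m _; rewrite expnS dvdn_mulr.
Qed.

Lemma natq0 n : (2 %| n)%N -> (n%:R : {poly F}) = 0.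
Proof. by rewrite (dvdn_pcharf H2) => /eqP h; rewrite -polyC_natr h polyC0. Qed.

Lemma q_pos n : (0 < #|F| ^ n)%N.
Proof. by rewrite expn_gt0 (ltn_trans _ q_gt1). Qed.

Lemma LM k : Lk k = Mk k * 'X.
Proof.
rewrite /Lk /Mk !mulrDl mul1r -!exprSr !prednK ?q_pos //; first by case: k.
by case: k; rewrite ?q_pos // (ltn_trans _ q_gt1).
Qed.

Lemma mulnq0 (p : {poly F}) n : (0 < n)%N -> p *+ (#|F| ^ n) = 0.
Proof. by move=> n0; rewrite -mulr_natr natq0 ?two_dvd_q // mulr0. Qed.

Lemma Lsep k : separable_poly (Lk k).
Proof.
rewrite unlock /Lk; case: k; rewrite /L0 /L1 !derivD !derivXn derivX.
  by rewrite !mulnq0 // !add0r coprimep1.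
by rewrite mulnq0 // -[X in _ *+ X](expn1 #|F|) mulnq0 // !add0r coprimep1.
Qed.

Lemma Msep k : separable_poly (Mk k).
Proof. by have := Lsep k; rewrite LM separable_mul => /and3P[]. Qed.

Lemma Mmonic k : Mk k \is monic.
Proof.
have j1 : (1 < if k then #|F| ^ 2 else #|F|)%N.
  case: (k); last exact: q_gt1.
  by rewrite (leq_trans q_gt1) // -{1}(expn1 #|F|) leq_exp2l // q_gt1.
have j3 : ((if k then #|F| ^ 2 else #|F|) < #|F| ^ 3)%N.
  case: (k); first by rewrite ltn_exp2l // q_gt1.
  by rewrite -{1}(expn1 #|F|) ltn_exp2l // q_gt1.
apply/monicP; rewrite /Mk -addrA lead_coefDl ?lead_coefXn // size_polyXn prednK ?q_pos //.
apply: (leq_ltn_trans (size_polyD _ _)); rewrite size_polyXn size_poly1 prednK.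
  by rewrite gtn_max j3 (ltn_trans _ j3).
exact: ltn_trans j1.
Qed.

Lemma M0root k : ~~ root (map_poly iota (Mk k)) 0.
Proof.
have j1 : (1 < if k then #|F| ^ 2 else #|F|)%N.
  case: (k); last exact: q_gt1.
  by rewrite (leq_trans q_gt1) // -{1}(expn1 #|F|) leq_exp2l // q_gt1.
have j3 : (1 < #|F| ^ 3)%N.
  by rewrite (leq_trans q_gt1) // -{1}(expn1 #|F|) leq_exp2l // q_gt1.
rewrite /root /Mk !rmorphD /= !map_polyXn rmorph1 !hornerE !expr0n.
have a3 : ((#|F| ^ 3).-1 == 0%N) = false by rewrite -subn1 subn_eq0 leqNgt j3.
have a1 : ((if k then (#|F| ^ 2)%N else #|F|).-1 == 0%N) = false.
  by rewrite -subn1 subn_eq0 leqNgt j1.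
by rewrite a3 a1 !mulr0n !add0r oner_eq0.
Qed.

Lemma root_M_L k r : root (map_poly iota (Mk k)) r -> root (map_poly iota (Lk k)) r.
Proof. by move=> h; rewrite LM rmorphM rootM h. Qed.

Local Notation G := (fun t : F * F * F => trinom7 t.1.1 t.1.2 t.2).

Lemma M_prod k : Mk k =
  \prod_(t | `[< irreducible_poly (G t) >] && (G t %| Lk k)) G t.
Proof.
apply: prod_factors; [exact: Mmonic | exact: Msep | exact: trinom_inj | |].
  move=> t /andP [/asboolP it dt]; split => //; first exact: trinom_monic.
  have co : coprimep (G t) 'X by rewrite coprimepX /root trinom0 (trinom_root0 it).
  by rewrite LM Gauss_dvdpl in dt.
move=> u mu iu du.
have su : size (map_poly iota u) != 1%N by rewrite size_map_poly (gtn_eqF iu.1).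
have [r rr] := closed_rootP _ su.
have rM : root (map_poly iota (Mk k)) r by apply: root_dvdp rr; rewrite dvdp_map.
have r0 : r != 0 by apply: contraNneq (M0root k) => <-.
have := root_M_L rM; rewrite L_root => /eqP e3.
have [a [b [c eu]]] := root_form mu iu rr r0 e3.
exists (a, b, c) => //=; rewrite -eu; apply/andP; split; first exact/asboolP.
by rewrite LM dvdp_mulr.
Qed.

Lemma disj (a b c : F) : irreducible_poly (trinom7 a b c) ->
  trinom7 a b c %| L0 F #|F| -> trinom7 a b c %| L1 F #|F| -> False.
Proof.
move=> ip d0 d1.
have su : size (map_poly iota (trinom7 a b c)) != 1%N by rewrite size_map_poly size_trinom.
have [r rr] := closed_rootP _ su.
have r0' : root (map_poly iota (Lk false)) r by apply: root_dvdp rr; rewrite dvdp_map.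
have r1' : root (map_poly iota (Lk true)) r by apply: root_dvdp rr; rewrite dvdp_map.
rewrite L_root in r0'; rewrite L_root in r1'.
have h0 : iter 3 phi r = iter 1 phi r + r by exact: (eqP r0').
have h1 : iter 3 phi r = iter 2 phi r + r by exact: (eqP r1').
have e12 : iter 1 phi r = iter 2 phi r by apply: (addIr r); rewrite -h0 -h1.
have e1 : iter 1 phi r = r by apply: phi_inj; exact: (esym e12).
have : iter 3 phi r = 0 by rewrite h0 e1 add2.
rewrite -(iter_phi0 3) => /iter_phi_inj r0.
move: rr; rewrite r0 -(rmorph0 iota) /root horner_map fmorph_eq0 trinom0.
by rewrite (negPf (trinom_root0 ip)).
Qed.

Lemma cover (a b c : F) : irreducible_poly (trinom7 a b c) ->
  (trinom7 a b c %| L0 F #|F|) || (trinom7 a b c %| L1 F #|F|).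
Proof.
move=> ip.
have su : size (map_poly iota (trinom7 a b c)) != 1%N by rewrite size_map_poly size_trinom.
have [r rr] := closed_rootP _ su.
have [k e3] := core_b ip rr.
have rL : root (map_poly iota (Lk k)) r by rewrite L_root e3.
have := dvd_of_root ip rr rL; case: k {e3 rL} => /= ->; by rewrite ?orbT.
Qed.

Lemma q_gt1n n : (0 < n)%N -> (1 < #|F| ^ n)%N.
Proof. by move=> n0; rewrite (leq_trans q_gt1) // -{1}(expn1 #|F|) leq_exp2l // q_gt1. Qed.

Lemma size_M k : size (Mk k) = (#|F| ^ 3)%N.
Proof.
have := Mmonic k; have := LM k => _ _.
have : size (Lk k) = (#|F| ^ 3).+1.
  rewrite /Lk; case: k; rewrite /L0 /L1 -addrA size_polyDl size_polyXn //.
    apply: (leq_ltn_trans (size_polyD _ _)); rewrite size_polyXn size_polyX gtn_max.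
    by rewrite !ltnS ltn_exp2l ?q_gt1 // q_gt1n.
  apply: (leq_ltn_trans (size_polyD _ _)); rewrite size_polyXn size_polyX gtn_max.
  by rewrite !ltnS -{1}(expn1 #|F|) ltn_exp2l ?q_gt1 // q_gt1n.
by rewrite LM size_mulX ?monic_neq0 ?Mmonic // => -[].
Qed.

Lemma count_k k :
  #|[set t : F * F * F | `[< irreducible_poly (G t) >] && (G t %| Lk k)]| =
  ((#|F| ^ 3 - 1) %/ 7)%N.
Proof.
have := size_M k; rewrite {1}M_prod size_prod; last first.
  by move=> t _; rewrite monic_neq0 // trinom_monic.
under eq_bigr do rewrite size_trinom.
rewrite sum_nat_const cardsE.
set n := #|_| => h.
have -> : (#|F| ^ 3 - 1 = 7 * n)%N.
  rewrite -h; lia.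
by rewrite mulKn.
Qed.

Lemma main_frob :
  L0 F #|F| * L1 F #|F| =
    'X^2 * \prod_(t : F * F * F | `[< irreducible_poly (trinom7 t.1.1 t.1.2 t.2) >])
             trinom7 t.1.1 t.1.2 t.2
  /\ #|[set t : F * F * F | `[< irreducible_poly (trinom7 t.1.1 t.1.2 t.2) >]
                            && (trinom7 t.1.1 t.1.2 t.2 %| L0 F #|F|)]|
     = ((#|F| ^ 3 - 1) %/ 7)%N
  /\ #|[set t : F * F * F | `[< irreducible_poly (trinom7 t.1.1 t.1.2 t.2) >]
                            && (trinom7 t.1.1 t.1.2 t.2 %| L1 F #|F|)]|
     = ((#|F| ^ 3 - 1) %/ 7)%N.
Proof.
split; last by split; [exact: (count_k false) | exact: (count_k true)].
have E0 := M_prod false; have E1 := M_prod true.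
have L0E : L0 F #|F| = Mk false * 'X := LM false.
have L1E : L1 F #|F| = Mk true * 'X := LM true.
rewrite L0E L1E E0 E1 /Lk /= [in RHS](bigID (fun t : F * F * F => G t %| L0 F #|F|)) /=.
have -> : \prod_(t | `[< irreducible_poly (G t) >] && ~~ (G t %| L0 F #|F|)) G t =
          \prod_(t | `[< irreducible_poly (G t) >] && (G t %| L1 F #|F|)) G t.
  apply: eq_bigl => -[[a b] c] /=.
  case: (asboolP (irreducible_poly (trinom7 a b c))) => //= ip.
  have := cover ip; have := disj ip.
  by case: (trinom7 a b c %| L0 F #|F|); case: (trinom7 a b c %| L1 F #|F|) => //= /(_ isT isT).
by rewrite mulrACA -expr2 mulrC.
Qed.

End Frob.

Theorem lemma1p10 (F : finFieldType) (H2 : (2%N \in [pchar F])) :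
  let q := #|F| in
  L0 F q * L1 F q =
    'X^2 * \prod_(t : F * F * F | `[< irreducible_poly (trinom7 t.1.1 t.1.2 t.2) >])
             trinom7 t.1.1 t.1.2 t.2
  /\ #|[set t : F * F * F | `[< irreducible_poly (trinom7 t.1.1 t.1.2 t.2) >]
                            && (trinom7 t.1.1 t.1.2 t.2 %| L0 F q)]|
     = ((q ^ 3 - 1) %/ 7)%N
  /\ #|[set t : F * F * F | `[< irreducible_poly (trinom7 t.1.1 t.1.2 t.2) >]
                            && (trinom7 t.1.1 t.1.2 t.2 %| L1 F q)]|
     = ((q ^ 3 - 1) %/ 7)%N.
Proof.
have [K [iota _]] := countable_algebraic_closure F.
exact: (main_frob iota H2).
Qed.
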